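(* Let $A=\{a_1,\dots,a_k\}$ with $k\ge2$, $u_1,u_2:A\to\mathbb{R}$, and assume there is a unique efficient option $a^\star$, i.e. $u_1(a^\star)+u_2(a^\star)>u_1(a)+u_2(a)$ for all $a\ne a^\star$. Then there exists $\bar\varepsilon>0$ such that for every $\varepsilon\in(0,\bar\varepsilon)$: an $\varepsilon$-robust subgame-perfect Nash equilibrium of the two-player Price \& Choose game exists, and the outcome of every $\varepsilon$-robust subgame-perfect Nash equilibrium is $a^\star$.
   Context: Quasi-linear Price \& Choose game: $P=\{p\in\mathbb{R}^k:\sum_j p_j=0\}$; player 1 chooses $p\in P$; then player 2, having observed $p$, chooses $a_j\in A$ and pays $p_j$ to player 1; payoffs $g_1(p,a_j)=u_1(a_j)+p_j$, $g_2(p,a_j)=u_2(a_j)-p_j$. Strategy profiles are $\sigma=(\sigma_1,\sigma_2)$ with $\sigma_1\in P$, $\sigma_2:P\to A$. For $\varepsilon>0$ and $p\in P$, let $\beta_2^\varepsilon(p)=\{a\in A: g_2(p,a)+\varepsilon\ge g_2(p,a')\text{ for all }a'\in A\}$ (the $\varepsilon$-maximizers of player 2). The profile $\sigma$ is an $\varepsilon$-robust subgame-perfect Nash equilibrium if (1) for every $p\in P$, $\sigma_2(p)\in\arg\min\{g_1(p,a):a\in\beta_2^\varepsilon(p)\}$, and (2) $g_1(\sigma_1,\sigma_2(\sigma_1))+\varepsilon\ge g_1(p',\sigma_2(p'))$ for all $p'\in P$. Its outcome is $\sigma_2(\sigma_1)$. *)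

(* Defs.v *)
From HB Require Import structures.
From mathcomp Require Import all_boot all_order all_algebra.
From mathcomp Require Import reals.
Set Implicit Arguments. Unset Strict Implicit. Unset Printing Implicit Defensive.
Import Order.TTheory GRing.Theory Num.Theory.
Local Open Scope ring_scope.

Section PriceChoose.
Variables (R : realType) (k : nat).

Definition inP (p : 'I_k -> R) : Prop := \sum_(j < k) p j = 0.

Definition g1 (u1 : 'I_k -> R) (p : 'I_k -> R) (a : 'I_k) : R := u1 a + p a.
Definition g2 (u2 : 'I_k -> R) (p : 'I_k -> R) (a : 'I_k) : R := u2 a - p a.

Definition beta2 (u2 : 'I_k -> R) (eps : R) (p : 'I_k -> R) (a : 'I_k) : Prop :=
  forall a' : 'I_k, g2 u2 p a' <= g2 u2 p a + eps.

(* eps-robust subgame-perfect Nash equilibrium (s1, s2); s2 is only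
   constrained on P, its values outside P are irrelevant. *)
Definition robust_spne (u1 u2 : 'I_k -> R) (eps : R)
    (s1 : 'I_k -> R) (s2 : ('I_k -> R) -> 'I_k) : Prop :=
  [/\ inP s1,
      (forall p, inP p ->
         beta2 u2 eps p (s2 p) /\
         (forall a, beta2 u2 eps p a -> g1 u1 p (s2 p) <= g1 u1 p a)) &
      (forall p', inP p' -> g1 u1 p' (s2 p') <= g1 u1 s1 (s2 s1) + eps)].

End PriceChoose.

(* Main.v *)
Require Import Defs.
From HB Require Import structures.
From mathcomp Require Import all_boot all_order all_algebra.
From mathcomp Require Import reals.
From mathcomp Require Import ring lra.
From Stdlib Require Import Classical.
Import Order.TTheory GRing.Theory Num.Theory.
Local Open Scope ring_scope.

Section Helpers.
Variables (R : realType) (k : nat) (u1 u2 : 'I_k -> R).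

Lemma sum_g2 p : inP p -> \sum_j g2 u2 p j = \sum_j u2 j.
Proof. by rewrite /inP /g2 sumrB => ->; rewrite subr0. Qed.

Lemma L1 eps p b : inP p -> beta2 u2 eps p b ->
  k%:R * g1 u1 p b <= k%:R * (u1 b + u2 b) - \sum_j u2 j + k%:R * eps.
Proof.
move=> hp hb.
have : \sum_j g2 u2 p j <= \sum_(j < k) (g2 u2 p b + eps) by apply: ler_sum => j _; exact: hb.
rewrite sumr_const card_ord -mulr_natl sum_g2 // /g1 /g2 => h.
rewrite ?mulrDr ?mulrBr in h *; lra.
Qed.

Lemma sum_ind (a0 : 'I_k) (x : R) : \sum_j (if j == a0 then x else 0) = x.
Proof. by rewrite -big_mkcond big_pred1_eq. Qed.

Lemma L2 eps p (astar : 'I_k) : 0 <= eps -> inP p ->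
  (forall a, a != astar -> ~ beta2 u2 eps p a) ->
  beta2 u2 eps p astar /\
  \sum_j u2 j <= k%:R * (g2 u2 p astar - eps) + eps.
Proof.
move=> eps0 hp hno.
have [a0 _ Hmax] := @arg_maxP _ _ 'I_k astar xpredT (g2 u2 p) isT.
have Hmax' : forall j, g2 u2 p j <= g2 u2 p a0 by move=> j; exact: Hmax.
have b0 : beta2 u2 eps p a0.
  by move=> a'; apply: le_trans (Hmax' a') _; rewrite lerDl.
have ea0 : a0 = astar.
  by case: (eqVneq a0 astar) => // /hno.
subst a0; split => //.
have pt : forall a, g2 u2 p a <= g2 u2 p astar - eps + (if a == astar then eps else 0).
  move=> a; case: (eqVneq a astar) => [->|ne]; first by rewrite subrK.
  rewrite addr0.
  have := hno a ne; move=> nb.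
  rewrite leNgt; apply/negP => lt; apply: nb => a'.
  apply: le_trans (Hmax' a') _; rewrite ltrBlDr in lt; exact: ltW.
have : \sum_j g2 u2 p j <= \sum_j (g2 u2 p astar - eps + (if j == astar then eps else 0)).
  by apply: ler_sum => a _; exact: pt.
rewrite sum_g2 // big_split /= sum_ind sumr_const card_ord mulr_natl; exact: id.
Qed.

Definition bb eps p (i : 'I_k) : bool := [forall a', g2 u2 p a' <= g2 u2 p i + eps].

Lemma bbP eps p i : reflect (beta2 u2 eps p i) (bb eps p i).
Proof. exact: (iffP forallP). Qed.

Definition amax (astar : 'I_k) p := Order.arg_max astar xpredT (g2 u2 p).

Lemma bb_amax eps astar p : 0 <= eps -> bb eps p (amax astar p).
Proof.
move=> e0; apply/bbP; rewrite /amax.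
case: (@arg_maxP _ _ 'I_k astar xpredT (g2 u2 p) isT) => a0 _ H a'.
by apply: le_trans (H a' isT) _; rewrite lerDl.
Qed.

Definition s2c eps astar p := Order.arg_min (amax astar p) (bb eps p) (g1 u1 p).

Lemma s2cP eps astar p : 0 <= eps ->
  beta2 u2 eps p (s2c eps astar p) /\
  (forall a, beta2 u2 eps p a -> g1 u1 p (s2c eps astar p) <= g1 u1 p a).
Proof.
move=> e0; rewrite /s2c.
case: (@arg_minP _ _ 'I_k (amax astar p) (bb eps p) (g1 u1 p) (bb_amax eps astar p e0)) => a Ha H.
split; first exact/bbP.
by move=> b /bbP hb; apply: H.
Qed.

Definition mm eps := (\sum_j u2 j + 2 * eps * k%:R - 2 * eps) / k%:R.
Definition pe eps (astar : 'I_k) (a : 'I_k) :=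
  u2 a - (mm eps - 2 * eps + (if a == astar then 2 * eps else 0)).

Lemma Kmm eps : (0 < k)%N -> k%:R * mm eps = \sum_j u2 j + 2 * eps * k%:R - 2 * eps.
Proof.
move=> hk; rewrite /mm mulrC divfK //; by rewrite pnatr_eq0 -lt0n.
Qed.

Lemma g2_pe eps astar a :
  g2 u2 (pe eps astar) a = mm eps - 2 * eps + (if a == astar then 2 * eps else 0).
Proof. rewrite /g2 /pe; set t := (if _ then _ else _); ring. Qed.

Lemma pe_in eps astar : (0 < k)%N -> inP (pe eps astar).
Proof.
move=> hk; rewrite /inP /pe sumrB big_split /= sum_ind sumr_const card_ord.
rewrite -[X in _ - (X + _)]mulr_natl mulrBr Kmm //; ring.
Qed.

Lemma beta_pe eps astar a : 0 < eps -> beta2 u2 eps (pe eps astar) a -> a = astar.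
Proof.
move=> e0 hb; case: (eqVneq a astar) => // ne.
have := hb astar; rewrite !g2_pe eqxx (negbTE ne) addr0 => h.
exfalso; move: h; apply/negP; rewrite -ltNge; lra.
Qed.

Lemma beta_pe_astar eps astar : 0 <= eps -> beta2 u2 eps (pe eps astar) astar.
Proof.
move=> e0 a; rewrite !g2_pe eqxx; case: (a == astar); lra.
Qed.

End Helpers.
Theorem proposition4 (R : realType) (k : nat) (hk : (2 <= k)%N)
    (u1 u2 : 'I_k -> R) (astar : 'I_k)
    (heff : forall a : 'I_k, a != astar -> u1 a + u2 a < u1 astar + u2 astar) :
  exists epsbar : R, 0 < epsbar /\
    forall eps : R, 0 < eps -> eps < epsbar ->
      (exists (s1 : 'I_k -> R) (s2 : ('I_k -> R) -> 'I_k),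
          robust_spne u1 u2 eps s1 s2) /\
      (forall (s1 : 'I_k -> R) (s2 : ('I_k -> R) -> 'I_k),
          robust_spne u1 u2 eps s1 s2 -> s2 s1 = astar).
Proof.
pose W := fun a => u1 a + u2 a.
pose epsbar := \big[Order.min/1]_(b | b != astar) ((W astar - W b) / 4).
have hk0 : (0 < k)%N by apply: leq_trans hk.
have Kpos : 0 < (k%:R : R) by rewrite ltr0n.
exists epsbar; split.
  apply: (big_ind (fun x => 0 < x)) => //.
    by move=> x y hx hy; rewrite lt_min hx hy.
  move=> b hb; have := heff b hb; rewrite /W; lra.
move=> eps e0 elt.
have gapb : forall b, b != astar -> 4 * eps <= W astar - W b.
  move=> b hb; have : epsbar <= (W astar - W b) / 4 by apply: bigmin_le_cond.
  lra.
have Kmm' := Kmm _ _ u2 eps hk0.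
split.
- exists (pe R k u2 eps astar), (s2c R k u1 u2 eps astar); split.
  + exact: pe_in.
  + by move=> p _; apply: s2cP; lra.
  + move=> p' hp'.
    have s1e : s2c R k u1 u2 eps astar (pe R k u2 eps astar) = astar.
      by apply: (beta_pe _ _ _ _ _ _ e0); apply: (s2cP _ _ u1 u2 eps astar _ (ltW e0)).1.
    rewrite s1e /g1 /pe eqxx.
    have [hb hmin] := s2cP _ _ u1 u2 eps astar p' (ltW e0).
    set b := s2c R k u1 u2 eps astar p' in hb hmin *.
    case: (classic (exists c, c != astar /\ beta2 u2 eps p' c)) => [[c [nc hc]] | nc].
    * have h1 := L1 _ _ u1 u2 _ _ _ hp' hc; have h2 := hmin c hc; have h3 := gapb c nc.
      rewrite /W in h3; rewrite /g1 in h1 h2.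
      rewrite -(ler_pM2l Kpos).
      nra.
    * have nc' : forall a, a != astar -> ~ beta2 u2 eps p' a.
        by move=> a na ha; apply: nc; exists a.
      have [_ hS] := L2 _ _ _ _ _ _ (ltW e0) hp' nc'.
      have eb : b = astar by case: (eqVneq b astar) => // /nc'.
      have hb' : beta2 u2 eps p' astar by rewrite -eb.
      have h2 := hmin astar hb'.
      rewrite eb in h2 *. rewrite /g1 /g2 in h2 hS *.
      rewrite -(ler_pM2l Kpos).
      nra.
- move=> s1 s2 [hs1 hs2 hs3].
  case: (eqVneq (s2 s1) astar) => // ne; exfalso.
  have [hb _] := hs2 s1 hs1.
  have h1 := L1 _ _ u1 u2 _ _ _ hs1 hb.
  have hpe := hs3 (pe R k u2 eps astar) (pe_in _ _ u2 eps astar hk0).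
  have s2pe : s2 (pe R k u2 eps astar) = astar.
    exact: (beta_pe _ _ _ _ _ _ e0 (hs2 _ (pe_in _ _ u2 eps astar hk0)).1).
  rewrite s2pe /g1 /pe eqxx in hpe.
  have h3 := gapb _ ne; rewrite /W in h3; rewrite /g1 in h1.
  have := hpe; rewrite -(ler_pM2l Kpos) => hpe'.
  nra.
Qed.
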